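(* Let $\mathcal N$ be a monotonic max-sum $(\mathrm{Col},\delta)$-GNN with $L$ layers and dimensions $\delta_0,\dots,\delta_L$. Then for every $0\le \ell\le L$ and every $1\le i\le \delta_\ell$, the set $X_\ell^i$ satisfies $X_\ell^i\subseteq \mathbb R_{\ge 0}$, and for every $\alpha\in\mathbb R$ the set $X_\ell^i\setminus X_\ell^i{}_{>\alpha}$ is finite, where $X_\ell^i{}_{>\alpha}=\{\alpha'\in X_\ell^i\mid \alpha'>\alpha\}$. (Consequently every nonempty $X_\ell^i{}_{>\alpha}$ has a least element.)
   Context: Graphs and GNNs. For a finite set of colours $\mathrm{Col}$ and $\delta\in\mathbb N$, a $(\mathrm{Col},\delta)$-graph is $G=\langle V,\{E^c\}_{c\in\mathrm{Col}},\lambda\rangle$ where $V$ is a finite set of vertices, $E^c\subseteq V\times V$ for each colour $c$, and $\lambda$ assigns to each $v\in V$ a feature vector $\mathbf v\in\mathbb R^\delta$. A $(\mathrm{Col},\delta)$-GNN $\mathcal N$ with $L\ge 1$ layers consists of dimensions $\delta_0=\delta,\delta_1,\dots,\delta_{L-1},\delta_L=\delta$; real matrices $A_\ell$ and $B_\ell^c$ of size $\delta_\ell\times\delta_{\ell-1}$ and bias vectors $b_\ell\in\mathbb R^{\delta_\ell}$ for $1\le\ell\le L$, $c\in\mathrm{Col}$; aggregation functions $\mathrm{agg}_\ell$ from finite real multisets to $\mathbb R$ (applied componentwise to finite multisets of vectors); an activation function $\sigma:\mathbb R\to\mathbb R$ and a classification function $\mathrm{cls}:\mathbb R\to\{0,1\}$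 (both applied componentwise). Applying $\mathcal N$ to $G$ produces labellings $\lambda_0=\lambda,\lambda_1,\dots,\lambda_L$ where, writing $\mathbf v_\ell$ for the vector of $v$ under $\lambda_\ell$, $\mathbf v_\ell=\sigma\big(A_\ell\mathbf v_{\ell-1}+\sum_{c\in\mathrm{Col}}B_\ell^c\,\mathrm{agg}_\ell(\{\!\{\mathbf u_{\ell-1}\mid (v,u)\in E^c\}\!\})+b_\ell\big)$. Max-sum aggregation. For $k\in\mathbb N_0\cup\{\infty\}$ and a finite real multiset $S$, let $m=\min(k,|S|)$; $\mathrm{maxsum}_k(S)=0$ if $m=0$, and otherwise it is the sum of the $m$ largest elements of $S$, counting multiplicities. Monotonic max-sum GNN: a $(\mathrm{Col},\delta)$-GNN such that (i) all entries of every $A_\ell$ and $B_\ell^c$ are nonnegative; (ii) each $\mathrm{agg}_\ell$ is $\mathrm{maxsum}_{k_\ell}$ for some $k_\ell\in\mathbb N_0\cup\{\infty\}$; (iii) $\sigma$ is monotonically increasing ($x<y\Rightarrow\sigma(x)\le\sigma(y)$), unbounded (for every $y$ there is $x$ with $\sigma(x)>y$), and takes values in $\mathbb R_{\ge0}$ with range $\mathbb R_{\ge 0}$; (iv) $\mathrm{cls}$ is a step function with some threshold $t\in\mathbb R$: $\mathrm{cls}(t')=0$ for $t'<t$ and $\mathrm{cls}(t')=1$ for $t'\ge t$. Sets $X_\ell^i$. A $(\mathrm{Col},\ell)$-multiset family $\mathcal Y$ assigns to each $c\in\mathrm{Col}$ a finite multiset $\mathcal Y^c$ of vectors of dimension $\delta_\ell$.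 For $1\le\ell\le L$, $1\le i\le\delta_\ell$, a vector $\mathbf x$ of dimension $\delta_{\ell-1}$ and a $(\mathrm{Col},\ell-1)$-multiset family $\mathcal Y$, let $\mathrm{Val}_\ell^i(\mathbf x,\mathcal Y)$ be the $i$-th component of $A_\ell\mathbf x+\sum_{c}B_\ell^c\,\mathrm{maxsum}_{k_\ell}(\mathcal Y^c)+b_\ell$. Define $X_0^i=\{0,1\}$ for $1\le i\le\delta_0$, and for $\ell\ge1$ let $X_\ell^i$ be the set of all values $\sigma(\mathrm{Val}_\ell^i(\mathbf x,\mathcal Y))$ where $\mathbf x$ ranges over vectors of dimension $\delta_{\ell-1}$ with $x_j\in X_{\ell-1}^j$ for all $j$, and $\mathcal Y$ ranges over $(\mathrm{Col},\ell-1)$-multiset families such that $y_j\in X_{\ell-1}^j$ for all $c$, all $\mathbf y\in\mathcal Y^c$ and all $j$. *)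

(* Defs.v *)
From HB Require Import structures.
From mathcomp Require Import all_boot all_order all_algebra.
From mathcomp Require Import boolp classical_sets cardinality reals.
Set Implicit Arguments. Unset Strict Implicit. Unset Printing Implicit Defensive.
Import Order.TTheory GRing.Theory Num.Theory.
Local Open Scope ring_scope.

(* k in N_0 \cup {infinity}: [None] encodes infinity. *)
Definition maxsum {R : realType} (k : option nat) (S : seq R) : R :=
  let m := match k with Some k' => minn k' (size S) | None => size S end in
  \sum_(x <- take m (sort (fun x y : R => y <= x) S)) x.

Definition maxsum_vec {R : realType} {n : nat} (k : option nat)
  (S : seq 'cV[R]_n) : 'cV[R]_n :=
  \col_(j < n) maxsum k [seq (v : 'cV[R]_n) j 0 | v <- S].

(* A (Col,delta)-GNN whose aggregation functions are max-sum functions.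
   Layer l+1 (1 <= l+1 <= L) has parameters A l, B l c, b l, k l
   (0-based indexing of layers); dims l = delta_l. *)
Record maxsumGNN (R : realType) (Col : finType) (delta : nat) := MkGNN {
  L : nat;
  dims : nat -> nat;
  Amat : forall l : nat, 'M[R]_(dims l.+1, dims l);
  Bmat : forall l : nat, Col -> 'M[R]_(dims l.+1, dims l);
  bvec : forall l : nat, 'cV[R]_(dims l.+1);
  kagg : nat -> option nat;
  sigma : R -> R;
  cls : R -> bool
}.

Definition is_GNN {R : realType} {Col : finType} {delta : nat}
  (N : maxsumGNN R Col delta) : Prop :=
  (1 <= L N)%N /\ dims N 0 = delta /\ dims N (L N) = delta.

Definition monotonic {R : realType} {Col : finType} {delta : nat}
  (N : maxsumGNN R Col delta) : Prop :=
  (forall l, (l < L N)%N -> forall i j, 0 <= Amat N l i j) /\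
  (forall l, (l < L N)%N -> forall c i j, 0 <= Bmat N l c i j) /\
  (forall x y, x < y -> sigma N x <= sigma N y) /\
  (forall y, exists x, sigma N x > y) /\
  (forall x, 0 <= sigma N x) /\
  (forall y, 0 <= y -> exists x, sigma N x = y) /\
  (exists t : R, forall t', cls N t' = (t <= t')).
(* (ii) is built in: every aggregation is maxsum_{kagg l}. *)

Definition Val {R : realType} {Col : finType} {delta : nat}
  (N : maxsumGNN R Col delta) (l : nat) (x : 'cV[R]_(dims N l))
  (Y : Col -> seq 'cV[R]_(dims N l)) : 'cV[R]_(dims N l.+1) :=
  Amat N l *m x + \sum_(c : Col) (Bmat N l c *m maxsum_vec (kagg N l) (Y c))
  + bvec N l.

(* Xset N l i r  <->  r \in X_l^{i+1}  (components 0-based). *)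
Fixpoint Xset {R : realType} {Col : finType} {delta : nat}
  (N : maxsumGNN R Col delta) (l : nat) : 'I_(dims N l) -> R -> Prop :=
  match l return 'I_(dims N l) -> R -> Prop with
  | 0 => fun _ r => r = 0 \/ r = 1
  | l'.+1 => fun i r =>
      exists (x : 'cV[R]_(dims N l')) (Y : Col -> seq 'cV[R]_(dims N l')),
        (forall j, @Xset R Col delta N l' j (x j 0)) /\
        (forall c y, y \in Y c -> forall j, @Xset R Col delta N l' j (y j 0)) /\
        r = sigma N (@Val R Col delta N l' x Y i 0)
  end.
Arguments Val {R Col delta} N l x Y.
Arguments Xset {R Col delta} N l _ _.

(* Main.v *)
Require Import Defs.
From HB Require Import structures.
From mathcomp Require Import all_boot all_order all_algebra.
From mathcomp Require Import boolp classical_sets cardinality reals.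
From mathcomp Require Import lra.
Import Order.TTheory GRing.Theory Num.Theory.
Local Open Scope ring_scope.
Local Open Scope classical_set_scope.
Set Implicit Arguments. Unset Strict Implicit.

Definition DF {R : realType} (Z : set R) :=
  (forall z, Z z -> 0 <= z) /\
  forall g, exists s : seq R, forall z, Z z -> z <= g -> z \in s.

Lemma DF_sub (R : realType) (Z1 Z2 : set R) :
  (forall z, Z1 z -> Z2 z) -> DF Z2 -> DF Z1.
Proof.
move=> H [H1 H2]; split; first by move=> z /H /H1.
move=> g; have [s Hs] := H2 g; exists s => z /H; exact: Hs.
Qed.

Lemma DF_add (R : realType) (Z1 Z2 : set R) : DF Z1 -> DF Z2 ->
  DF [set z | exists a b, Z1 a /\ Z2 b /\ z = a + b].
Proof.
move=> [P1 B1] [P2 B2]; split.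
  by move=> z [a [b [Ha [Hb ->]]]]; apply: addr_ge0; [exact: P1|exact: P2].
move=> g; have [s1 H1] := B1 g; have [s2 H2] := B2 g.
exists [seq a + b | a <- s1, b <- s2] => z [a [b [Ha [Hb ->]]]] Hz.
have := P1 _ Ha; have := P2 _ Hb => ha hb.
apply: allpairs_f; [apply: H1 => //|apply: H2 => //]; lra.
Qed.

Lemma DF_scale (R : realType) (a : R) (Z : set R) : 0 <= a -> DF Z ->
  DF [set z | exists y, Z y /\ z = a * y].
Proof.
move=> a0 [P B]; split.
  by move=> z [y [Hy ->]]; apply: mulr_ge0 => //; exact: P.
move=> g; case: (ltP 0 a) => ha; last first.
  have a00 : a = 0 by apply/eqP; rewrite eq_le ha a0.
  by exists [:: 0] => z [y [_ ->]] _; rewrite a00 mul0r inE.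
have [s Hs] := B (a^-1 * g).
exists [seq a * y | y <- s] => z [y [Hy ->]] Hz.
apply: map_f; apply: Hs => //; by rewrite ler_pdivlMl.
Qed.

Lemma DF_big (R : realType) (I : Type) (s : seq I) (Z : I -> set R) :
  (forall k, DF (Z k)) ->
  DF [set z | exists t : I -> R, (forall k, Z k (t k)) /\ z = \sum_(k <- s) t k].
Proof.
move=> HZ; elim: s => [|a s IH].
  split; first by move=> z [t [_ ->]]; rewrite big_nil.
  by move=> g; exists [:: 0] => z [t [_ ->]] _; rewrite big_nil inE.
apply: DF_sub (DF_add (HZ a) IH).
move=> z [t [Ht ->]]; rewrite big_cons; exists (t a), (\sum_(k <- s) t k).
split; first exact: Ht.
by split=> //; exists t.
Qed.

Lemma pos_eps (R : realType) (s : seq R) : (forall a, a \in s -> 0 < a) ->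
  exists e : R, 0 < e /\ forall a, a \in s -> e <= a.
Proof.
elim: s => [|b s IH] H; first by exists 1; split.
have [e [e0 He]] : exists e : R, 0 < e /\ forall a, a \in s -> e <= a.
  by apply: IH => a ha; apply: H; rewrite inE ha orbT.
have hb : 0 < b by apply: H; rewrite inE eqxx.
exists (Num.min e b); split; first by rewrite lt_min e0 hb.
move=> a; rewrite inE => /orP [/eqP ->|ha]; first by rewrite ge_min lexx orbT.
by rewrite ge_min He.
Qed.

Fixpoint sums (R : realType) (s : seq R) (n : nat) : seq R :=
  match n with
  | 0 => [:: 0]
  | n'.+1 => 0 :: [seq a + c | a <- s, c <- sums s n']
  end.

Lemma sums_mem (R : realType) (s : seq R) n (T : seq R) :
  (forall e, e \in T -> e \in s) -> (size T <= n)%N ->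
  \sum_(e <- T) e \in sums s n.
Proof.
elim: n T => [|n IH] [|e T] //= HT Hs.
- by rewrite big_nil mem_head.
- by rewrite big_nil mem_head.
rewrite big_cons inE; apply/orP; right; apply: allpairs_f.
  by apply: HT; rewrite inE eqxx.
by apply: IH => // x hx; apply: HT; rewrite inE hx orbT.
Qed.

Lemma sum_ge_elt (R : realType) (T : seq R) e :
  (forall x, x \in T -> 0 <= x) -> e \in T -> e <= \sum_(x <- T) x.
Proof.
move=> H he; rewrite (big_rem e he) /= lerDl.
rewrite big_seq_cond; apply: sumr_ge0 => x /andP [hx _].
by apply: H; apply: mem_rem hx.
Qed.

Lemma size_eps (R : realType) (T : seq R) e :
  (forall x, x \in T -> e <= x) -> (size T)%:R * e <= \sum_(x <- T) x.
Proof.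
elim: T => [|a T IH] H /=; first by rewrite big_nil mul0r.
rewrite big_cons -addn1 natrD mulrDl mul1r addrC lerD //.
  by apply: H; rewrite inE eqxx.
by apply: IH => x hx; apply: H; rewrite inE hx orbT.
Qed.

Lemma DF_lists (R : realType) (X : set R) : DF X ->
  DF [set z | exists T : seq R, (forall e, e \in T -> X e) /\ z = \sum_(e <- T) e].
Proof.
move=> [P B]; split.
  move=> z [T [HT ->]]; rewrite big_seq_cond; apply: sumr_ge0 => x /andP [hx _].
  exact: P (HT _ hx).
move=> g; have [s Hs] := B g.
set s' := [seq a <- s | 0 < a].
have [e [e0 He]] : exists e : R, 0 < e /\ forall a, a \in s' -> e <= a.
  by apply: pos_eps => a; rewrite mem_filter => /andP [].
case: (ltP g 0) => hg.
  exists [::] => z [T [HT ->]] Hz; exfalso.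
  have : 0 <= \sum_(x <- T) x.
    rewrite big_seq_cond; apply: sumr_ge0 => x /andP [hx _]; exact: P (HT _ hx).
  lra.
have gp : 0 <= g / e by rewrite divr_ge0 // ltW.
exists (sums s' (Num.Def.archi_bound (g / e))) => z [T [HT ->]] Hz.
have nT : forall x, x \in T -> 0 <= x by move=> x hx; exact: P (HT _ hx).
have Hsum0 : \sum_(x <- T) x = \sum_(x <- [seq x <- T | 0 < x]) x.
  rewrite big_filter [RHS]big_mkcond /=; apply: eq_big_seq => x hx.
  case: ifP => // /negbT; rewrite -leNgt => hx0.
  by apply/eqP; rewrite eq_le hx0 nT.
rewrite Hsum0.
have memT' : forall x, x \in [seq x <- T | 0 < x] -> x \in s'.
  move=> x; rewrite mem_filter => /andP [hx0 hx].
  rewrite mem_filter hx0 /=; apply: Hs; first exact: HT.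
  by apply: le_trans Hz; apply: sum_ge_elt.
apply: sums_mem => //.
have := size_eps (T := [seq x <- T | 0 < x]) (e := e).
move=> /(_ (fun x hx => He _ (memT' _ hx))) Hse.
have Hsum := esym Hsum0.
have hb := archi_boundP gp.
rewrite -(ler_nat R); apply: ltW.
have h1 : (size [seq x <- T | 0 < x])%:R <= g / e.
  by rewrite ler_pdivlMr // ; apply: le_trans Hse _; rewrite Hsum.
exact: le_lt_trans h1 hb.
Qed.

Lemma DF_maxsum (R : realType) (k : option nat) (X : set R) : DF X ->
  DF [set z | exists S : seq R, (forall e, e \in S -> X e) /\ z = maxsum k S].
Proof.
move=> H; apply: DF_sub (DF_lists H) => z [S [HS ->]].
rewrite /maxsum; set m := (match k with Some k' => _ | None => _ end).
exists (take m (sort (fun x y : R => y <= x) S)); split => // e /mem_take.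
by rewrite mem_sort => /HS.
Qed.

Lemma sigma_lt (R : realType) (f : R -> R) (a x0 v : R) :
  (forall x y, x < y -> f x <= f y) -> a < f x0 -> f v <= a -> v < x0.
Proof.
move=> Hm h1 h2; case: (ltP v x0) => // h; exfalso.
move: h; rewrite le_eqVlt => /orP [/eqP e|h].
  by move: h2; rewrite -e; lra.
by have := Hm _ _ h; lra.
Qed.

Lemma main_DF (R : realType) (Col : finType) (delta : nat)
  (N : maxsumGNN R Col delta) :
  monotonic N -> forall l : nat, (l <= L N)%N -> forall i, DF (Xset N l i).
Proof.
move=> [HA [HB [Hmono [Hunb [Hpos _]]]]].
elim=> [|l IH] hl i.
  split; first by move=> z /= [->|->]; rewrite ?lexx ?ler01.
  by move=> g; exists [:: 0; 1] => z /= [->|->] _; rewrite !inE eqxx ?orbT.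
have hlt : (l < L N)%N by [].
have IH' := IH (ltnW hlt).
split.
  by move=> z /= [x [Y [_ [_ ->]]]]; apply: Hpos.
move=> alpha; have [x0 Hx0] := Hunb alpha.
set Z1 := fun j => [set w | exists y, Xset N l j y /\ w = Amat N l i j * y].
set S1 := [set z | exists t : 'I_(dims N l) -> R,
   (forall j, Z1 j (t j))
   /\ z = \sum_(j <- index_enum 'I_(dims N l)) t j].
set M := fun j => [set z | exists S : seq R,
        (forall e, e \in S -> Xset N l j e) /\ z = maxsum (kagg N l) S].
set W := fun c j => [set w | exists y, M j y /\ w = Bmat N l c i j * y].
set Z2 := fun c : Col => [set z | exists t : 'I_(dims N l) -> R,
   (forall j, W c j (t j))
   /\ z = \sum_(j <- index_enum 'I_(dims N l)) t j].
set S2 := [set z | exists t : Col -> R, (forall c, Z2 c (t c))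
   /\ z = \sum_(c <- index_enum Col) t c].
have DF1 : DF S1.
  have HZ1 : forall j, DF (Z1 j).
    by move=> j; apply: DF_scale; [exact: HA|exact: IH'].
  exact: (DF_big (index_enum _) HZ1).
have DF2 : DF S2.
  have HW : forall c j, DF (W c j).
    by move=> c j; apply: DF_scale; [exact: HB|exact: DF_maxsum].
  have HZ2 : forall c, DF (Z2 c) by move=> c; exact: (DF_big (index_enum _) (HW c)).
  exact: (DF_big (index_enum _) HZ2).
have [_ Hs] : DF [set z | exists a b, S1 a /\ S2 b /\ z = a + b].
  exact: DF_add.
have [s' Hs'] := Hs (x0 - bvec N l i 0).
exists [seq sigma N (w + bvec N l i 0) | w <- s'].
move=> z /= [x [Y [Hx [HY ->]]]] hz.
set w := (Amat N l *m x) i 0 + (\sum_c (Bmat N l c *m maxsum_vec (kagg N l) (Y c))) i 0.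
have Ev : Val N l x Y i 0 = w + bvec N l i 0 by rewrite /Val /w !mxE.
rewrite Ev in hz *.
apply: map_f; apply: Hs'.
  exists ((Amat N l *m x) i 0),
         ((\sum_c (Bmat N l c *m maxsum_vec (kagg N l) (Y c))) i 0).
  split; last split => //.
    exists (fun j => Amat N l i j * x j 0); split; last by rewrite mxE.
    by move=> j; exists (x j 0); split.
  exists (fun c => (Bmat N l c *m maxsum_vec (kagg N l) (Y c)) i 0).
  split; last by rewrite summxE.
  move=> c; exists (fun j => Bmat N l c i j * maxsum_vec (kagg N l) (Y c) j 0).
  split; last by rewrite mxE.
  move=> j; exists (maxsum_vec (kagg N l) (Y c) j 0); split => //.
  exists [seq (v : 'cV[R]_(dims N l)) j 0 | v <- Y c]; split; last by rewrite mxE.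
  by move=> e /mapP [v hv ->]; apply: HY hv j.
have := sigma_lt Hmono Hx0 hz; lra.
Qed.

Theorem theorem1 (R : realType) (Col : finType) (delta : nat)
  (N : maxsumGNN R Col delta) :
  is_GNN N -> monotonic N ->
  forall l : nat, (l <= L N)%N -> forall i : 'I_(dims N l),
    [set r | Xset N l i r] `<=` [set r | (0 <= r)%R] /\
    forall alpha : R,
      finite_set ([set r | Xset N l i r] `\` [set r | Xset N l i r /\ (r > alpha)%R]).
Proof.
move=> _ Hm l hl i; have [H1 H2] := main_DF Hm hl i.
split; first by move=> r; apply: H1.
move=> alpha; have [s Hs] := H2 alpha.
apply: (sub_finite_set _ (finite_seq s)) => r /= [hr hn].
apply: Hs => //; rewrite leNgt; apply/negP => h; exact: hn (conj hr h).
Qed.
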